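(* Let $G(n,4,1)$ be the graph whose vertices are the $4$-element subsets of $[n]$, two of them adjacent iff they intersect in exactly one element. For a set $A$ of vertices let $d(A)=\max_{x\neq y}|\{v\in A:\{x,y\}\subset v\}|$. If $A$ is an independent set in $G(n,4,1)$ with $d(A)\le \frac{(tn)^2}{2}$ for some $t\in(0,1)$, then $$|A|\le (1+o(1))\max\left(\frac{n^2}{8},\frac{tn^2}{2}\right),$$ where $o(1)\to 0$ as $n\to\infty$ and does not depend on the particular set $A$. *)

(* Defs.v *)
From mathcomp Require Import all_boot all_order all_algebra.
From mathcomp Require Import reals.
Set Implicit Arguments. Unset Strict Implicit. Unset Printing Implicit Defensive.

Definition vertex_set (n : nat) (A : {set {set 'I_n}}) : Prop :=
  forall v, v \in A -> #|v| = 4.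

Definition independent_G41 (n : nat) (A : {set {set 'I_n}}) : Prop :=
  forall u v, u \in A -> v \in A -> #|u :&: v| != 1.

(* d(A) = max_{x <> y} |{ v in A : {x,y} subset v }|  (0 if n < 2). *)
Definition dA (n : nat) (A : {set {set 'I_n}}) : nat :=
  \max_(p : 'I_n * 'I_n | p.1 != p.2) #|[set v in A | [set p.1; p.2] \subset v]|.

(* Main.v *)
Require Import Defs.
From mathcomp Require Import all_boot all_order all_algebra.
From mathcomp Require Import reals.
From mathcomp Require Import zify.

Set Implicit Arguments. Unset Strict Implicit. Unset Printing Implicit Defensive.

Lemma card_bigcup_le (I T : finType) (X : {pred I}) (F : I -> {set T}) :
  #|\bigcup_(i in X) F i| <= \sum_(i in X) #|F i|.
Proof.
apply: (big_ind2 (fun (S : {set T}) m => #|S| <= m)) => //.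
- by rewrite cards0.
- move=> S1 m1 S2 m2 h1 h2; apply: leq_trans (leq_card_setU _ _) _.
  exact: leq_add.
Qed.

Lemma ub (I T : finType) (V : {set T}) (X : {pred I}) (R : I -> T -> bool) :
  (forall v, v \in V -> exists2 i, i \in X & R i v) ->
  #|V| <= \sum_(i in X) #|[set v in V | R i v]|.
Proof.
move=> H; apply: leq_trans (card_bigcup_le _ _).
apply: subset_leq_card; apply/subsetP => v vV.
have [i iX Riv] := H v vV.
by apply/bigcupP; exists i => //; rewrite inE vV.
Qed.

Lemma dcount (I T : finType) (X : {pred I}) (V : {pred T}) (R : I -> T -> bool) :
  \sum_(i in X) #|[set v in V | R i v]| = \sum_(v in V) #|[set i in X | R i v]|.
Proof.
have E (J U : finType) (Y : {pred U}) (P : U -> bool) :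
    #|[set u in Y | P u]| = \sum_(u in Y) (P u : nat).
  rewrite -sum1_card big_mkcond /= [RHS]big_mkcond /=.
  by apply: eq_bigr => u _; rewrite inE; case: (u \in Y); case: (P u).
under eq_bigr do rewrite (E I).
under [RHS]eq_bigr do rewrite (E T).
exact: exchange_big.
Qed.

Lemma card_le1 (T : finType) (S : {set T}) :
  (forall a b, a \in S -> b \in S -> a = b) -> #|S| <= 1.
Proof.
move=> H; rewrite leqNgt; apply/negP => /card_gt1P [a [b [aS bS]]].
by rewrite (H a b aS bS) eqxx.
Qed.
Section Main.
Variable n : nat.
Variable A : {set {set 'I_n}}.
Hypothesis HV : vertex_set A.
Hypothesis HI : independent_G41 A.

Definition St (x : 'I_n) := [set s in A | x \in s].
Definition twin x y := (y != x) && (St x == St y).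
Definition tls x := [forall y, ~~ twin x y].
Definition prd x := #|[set y | twin x y]| == 1.
Definition tw x := odflt x [pick y | twin x y].

Lemma c4 v : v \in A -> #|v| = 4.
Proof. exact: HV. Qed.

Lemma i1 u v : u \in A -> v \in A -> #|u :&: v| != 1.
Proof. exact: HI. Qed.

Lemma no5 v (l : seq 'I_n) : v \in A -> uniq l -> {subset l <= v} -> size l <= 4.
Proof.
move=> vA ul sl; rewrite -(c4 vA) cardE; apply: uniq_leq_size => // e /sl.
by rewrite mem_enum.
Qed.

Lemma in4 v (l : seq 'I_n) e : v \in A -> uniq l -> size l = 4 ->
  {subset l <= v} -> e \in v -> e \in l.
Proof.
move=> vA ul sz sl ev; apply/negPn/negP => el.
have h := no5 (l := e :: l) vA; rewrite /= el ul sz in h.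
suff : (5 <= 4)%N by [].
by apply: h => // z; rewrite inE => /orP[/eqP->|/sl].
Qed.

Lemma eq4 s1 s2 (l : seq 'I_n) : s1 \in A -> s2 \in A -> uniq l -> size l = 4 ->
  {subset l <= s1} -> {subset l <= s2} -> s1 = s2.
Proof.
move=> A1 A2 ul sz l1 l2; apply/setP => e; apply/idP/idP => He.
- have: e \in l by apply: (in4 A1).
  exact: l2.
- have: e \in l by apply: (in4 A2).
  exact: l1.
Qed.

Lemma two_in (X : {set 'I_n}) x : #|X| != 1 -> x \in X -> exists2 u, u \in X & u != x.
Proof.
move=> h xX; case: (boolP [exists u in X, u != x]) => [/existsP[u /andP[]]|/existsPn H].
  by exists u.
exfalso; move/negP: h; apply; apply/cards1P; exists x.
apply/setP => e; rewrite in_set1; apply/idP/eqP => [eX|->//].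
by have := H e; rewrite eX /= negbK => /eqP.
Qed.

Lemma twin_sym x y : twin x y = twin y x.
Proof. by rewrite /twin eq_sym [St x == _]eq_sym. Qed.

Lemma twin_mem x y s : twin x y -> s \in A -> (x \in s) = (y \in s).
Proof.
case/andP=> _ /eqP E sA.
have h1 : (s \in St x) = (s \in St y) by rewrite E.
by rewrite !inE sA in h1.
Qed.

Lemma twin_neq x y : twin x y -> y != x.
Proof. by case/andP. Qed.

Lemma twin_trans x y z : twin x y -> twin y z -> z != x -> twin x z.
Proof.
by case/andP=> _ /eqP E1 /andP[_ /eqP E2] h; rewrite /twin h E1 E2 eqxx.
Qed.

Lemma prd_tw x : prd x -> twin x (tw x).
Proof.
rewrite /prd => /cards1P[y E]; rewrite /tw; case: pickP => [z //|H].
have : y \in [set y | twin x y] by rewrite E in_set1.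
by rewrite inE H.
Qed.

Lemma prd_uniq x y : prd x -> twin x y -> y = tw x.
Proof.
move=> p; have t := prd_tw p; move: p; rewrite /prd => /cards1P[z E] h.
have : y \in [set y | twin x y] by rewrite inE.
have : tw x \in [set y | twin x y] by rewrite inE.
by rewrite E !in_set1 => /eqP -> /eqP.
Qed.

Lemma tls_prd x : tls x -> ~~ prd x.
Proof.
move=> /forallP H; rewrite /prd; suff -> : [set y | twin x y] = set0 by rewrite cards0.
by apply/setP => y; rewrite !inE (negbTE (H y)).
Qed.

Lemma prd_tw_prd x : prd x -> prd (tw x).
Proof.
move=> p; have t := prd_tw p; rewrite /prd; apply/cards1P; exists x.
apply/setP => y; rewrite in_set1 inE; apply/idP/eqP => [h|->]; last by rewrite twin_sym.
apply/eqP; apply: contraT => yx.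
have := twin_trans t h yx; move/(prd_uniq p) => E.
by move: h; rewrite /twin -E eqxx.
Qed.

Lemma tw_neq x : prd x -> tw x != x.
Proof. by move/prd_tw/twin_neq. Qed.

Lemma tw_mem x s : prd x -> s \in A -> x \in s -> tw x \in s.
Proof. by move=> p sA xs; rewrite -(twin_mem (prd_tw p) sA). Qed.

Lemma tls_neq_prd a x : tls a -> prd x -> a != x.
Proof. by move=> ta px; apply: contraTneq ta => ->; apply/negP => /tls_prd; rewrite px. Qed.

Lemma kern_disj x x' : prd x -> prd x' -> x' != x -> x' != tw x ->
  [/\ tw x' != x & tw x' != tw x].
Proof.
move=> p p' h1 h2; split.
- apply: contra h2 => /eqP E; apply/eqP; apply: (prd_uniq p).
  by rewrite twin_sym -E prd_tw.
- apply: contra h2 => /eqP E; apply/eqP; apply: (prd_uniq p).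
  apply: twin_trans (prd_tw p) _ h1.
  by rewrite -E twin_sym prd_tw.
Qed.

Definition sepw x y := odflt set0 [pick w in A | (x \in w) != (y \in w)].

Lemma sepw_card x y : #|sepw x y| <= 4.
Proof.
rewrite /sepw; case: pickP => [w /andP[wA _]|_] /=; first by rewrite c4.
by rewrite cards0.
Qed.

Lemma tls_St x y : tls x -> y != x -> St x != St y.
Proof. by move=> /forallP /(_ y); rewrite /twin negb_and negbK => /orP[->|]. Qed.

Lemma sepP x y s : x != y -> St x != St y -> s \in A -> x \in s -> y \in s ->
  exists u, [/\ u \in s, u \in sepw x y, u != x & u != y].
Proof.
move=> xy Sxy sA xs ys; rewrite /sepw; case: pickP => [w /andP[wA hw]|H] /=; last first.
  exfalso; move/negP: Sxy; apply; apply/eqP/setP => w; rewrite !inE.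
  by have := H w; case: (w \in A) => //= /negbFE/eqP ->.
case xw: (x \in w) hw => /= yw.
- have xsw : x \in s :&: w by rewrite inE xs xw.
  have [u uI ux] := two_in (i1 sA wA) xsw.
  move: uI; rewrite inE => /andP[us uw]; exists u; split => //.
  by apply: contraTneq uw => ->; rewrite yw.
- have ysw : y \in s :&: w by rewrite inE ys; move: yw; case: (y \in w).
  have [u uI uy] := two_in (i1 sA wA) ysw.
  move: uI; rewrite inE => /andP[us uw]; exists u; split => //.
  by apply: contraTneq uw => ->; rewrite xw.
Qed.

Definition tcnt (T : {set 'I_n}) := #|[set s in A | T \subset s]|.

Lemma plusT (T : {set 'I_n}) s p : #|T| = 3 -> s \in A -> T \subset s -> p \in s -> p \notin T ->
  s = p |: T.
Proof.
move=> cT sA Ts ps pT; apply/eqP; rewrite eq_sym eqEcard cardsU1 pT cT c4 //.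
by rewrite andbT subUset sub1set ps Ts.
Qed.

Lemma out3 (T : {set 'I_n}) s : #|T| = 3 -> s \in A -> exists2 p, p \in s & p \notin T.
Proof.
move=> cT sA; have : 0 < #|s :\: T|.
  rewrite cardsD c4 //; have : #|s :&: T| <= 3 by rewrite -cT subset_leq_card // subsetIr.
  by move=> h; rewrite subn_gt0; apply: leq_ltn_trans h _.
by case/card_gt0P => p; rewrite inE => /andP[pT ps]; exists p.
Qed.

Lemma petal (T W : {set 'I_n}) : #|T| = 3 -> 4 < tcnt T -> #|W| <= 4 ->
  exists s p, [/\ s \in A, T \subset s, p \in s, p \notin T & p \notin W].
Proof.
move=> cT big cW.
case: (boolP [exists s, [exists p, [&& s \in A, T \subset s, p \in s, p \notin T & p \notin W]]]).
  by case/existsP => s /existsP[p /and5P[*]]; exists s, p.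
move/existsPn => H; exfalso.
suff : tcnt T <= 4 by rewrite leqNgt big.
apply: leq_trans cW; apply: leq_trans (leq_imset_card (fun p => p |: T) W).
apply: subset_leq_card; apply/subsetP => s; rewrite inE => /andP[sA Ts].
have [p ps pT] := out3 cT sA.
have pW : p \in W.
  move/existsPn: (H s) => /(_ p); rewrite sA Ts ps pT /=.
  by rewrite negbK.
by apply/imsetP; exists p => //; apply: plusT.
Qed.

Definition Aa := [set v in A | [exists z in v, #|St z| == 1]].

Lemma Aa_card : #|Aa| <= n.
Proof.
have := @ub _ _ Aa [set: 'I_n] (fun z v => (z \in v) && (#|St z| == 1)).
move=> /(_ _) h; apply: leq_trans (h _) _.
  move=> v; rewrite inE => /andP[_ /existsP[z /andP[zv cz]]].
  by exists z; rewrite ?inE ?zv.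
rewrite -[X in (_ <= X)%N]card_ord -cardsT -sum1_card leq_sum // => z _.
apply: card_le1 => a b; rewrite !inE => /and3P[/andP[aA _] az cz] /and3P[/andP[bA _] bz _].
move/cards1P: cz => [w Ew].
have : a \in St z by rewrite inE aA.
have : b \in St z by rewrite inE bA.
by rewrite Ew !in_set1 => /eqP-> /eqP->.
Qed.

Definition Ab := [set v in A | [forall x in v, tls x]].
Definition bigv (v : {set 'I_n}) :=
  [exists T : {set 'I_n}, [&& T \subset v, #|T| == 3 & 4 < tcnt T]].
Definition Ab1 := [set v in Ab | bigv v].
Definition Ab0 := [set v in Ab | ~~ bigv v].

Lemma Ab_tls v x : v \in Ab -> x \in v -> tls x.
Proof. by rewrite inE => /andP[_ /forallP H] xv; have := H x; rewrite xv. Qed.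

Lemma Ab_A v : v \in Ab -> v \in A.
Proof. by rewrite inE => /andP[]. Qed.

Lemma card_idx3 (v0 : {set 'I_n}) : v0 \in A ->
  #|[set p : 'I_n * 'I_n * 'I_n | [&& p.1.1 \in v0, p.1.2 \in v0 & p.2 \in sepw p.1.1 p.1.2]]| <= 64.
Proof.
move=> v0A.
set X := [set p : 'I_n * 'I_n * 'I_n | _].
have := @ub _ _ X (setX v0 v0) (fun q p => p.1 == q).
move=> /(_ _) h; apply: leq_trans (h _) _.
  move=> [[x y] u]; rewrite inE /= => /and3P[xv yv _].
  by exists (x, y) => //; rewrite inE xv yv.
apply: leq_trans (_ : \sum_(q in setX v0 v0) 4 <= 64)%N.
  apply: leq_sum => [[x y]] _.
  apply: leq_trans (sepw_card x y).
  apply: leq_trans (leq_imset_card (fun u => ((x, y), u)) (sepw x y)).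
  apply: subset_leq_card; apply/subsetP => [[[a b] u]].
  rewrite !inE /= => /andP[/and3P[_ _ us] /eqP E]; case: E => Ea Eb; subst a b.
  by apply/imsetP; exists u.
by rewrite sum_nat_const cardsX c4.
Qed.

Definition Hz z := [set v in Ab | (z \in v) &&
    [exists T : {set 'I_n}, [&& T \subset v, #|T| == 3, z \notin T & 4 < tcnt T]]].

Lemma Hz_A z v : v \in Hz z -> v \in A.
Proof. by rewrite inE => /andP[/Ab_A]. Qed.

Lemma Hz_z z v : v \in Hz z -> z \in v.
Proof. by rewrite inE => /and3P[]. Qed.

Lemma Hz_card z : #|Hz z| <= 64.
Proof.
set H := Hz z.
case: (set_0Vmem H) => [->|[v0 v0H]]; first by rewrite cards0.
move: (v0H); rewrite inE => /andP[v0b /andP[zv0 /existsP[T0 /and4P[T0v0 /eqP cT0 zT0 bT0]]]].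
have v0A := Ab_A v0b.
have Ev0 : v0 = z |: T0 by apply: plusT.
have := @ub _ _ H [set p : 'I_n * 'I_n * 'I_n | [&& p.1.1 \in v0, p.1.2 \in v0 & p.2 \in sepw p.1.1 p.1.2]] (fun p v => [&& p.1.1 \in v, p.1.2 \in v, p.2 \in v & uniq [:: p.1.1; p.1.2; p.2; z]]).
move=> /(_ _) h; apply: leq_trans (h _) _; last first.
  apply: leq_trans (card_idx3 v0A); rewrite -sum1_card leq_sum // => [[[x y] u]] _ /=.
  apply: card_le1 => a b; rewrite [a \in _]inE [b \in _]inE.
  move=> /andP[aH /and4P[xa ya ua un]] /andP[bH /and4P[xb yb ub _]].
  have aA := Hz_A aH; have bA := Hz_A bH; have za := Hz_z aH; have zb := Hz_z bH.
  apply: (@eq4 a b [:: x; y; u; z] aA bA un erefl) => e; rewrite !inE.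
    by case/or4P => /eqP->.
  by case/or4P => /eqP->.
move=> v vH; move: (vH); rewrite inE => /andP[vb /andP[zv /existsP[T /and4P[Tv /eqP cT zT bT]]]].
have vA := Ab_A vb.
have Ev : v = z |: T by apply: plusT.
have c4v : #|v| <= 4 by rewrite c4.
have [s [p [sA T0s ps pT0 pv]]] := petal cT0 bT0 c4v.
have Es : s = p |: T0 by apply: plusT.
have zI : z \in v :&: v0 by rewrite inE zv zv0.
have [x xI xz] := two_in (i1 vA v0A) zI.
move: xI; rewrite inE => /andP[xv xv0].
have xT0 : x \in T0 by move: xv0; rewrite Ev0 in_setU1 (negbTE xz).
have xsv : x \in s :&: v by rewrite inE Es in_setU1 xT0 orbT xv.
have [y yI yx] := two_in (i1 sA vA) xsv.
move: yI; rewrite inE => /andP[ys yv].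
have yT0 : y \in T0.
  move: ys; rewrite Es in_setU1 => /orP[/eqP yp|//].
  by move: pv; rewrite -yp yv.
have yz : y != z by apply: contraNneq zT0 => <-.
have xT : x \in T by move: xv; rewrite Ev in_setU1 (negbTE xz).
have yT : y \in T by move: yv; rewrite Ev in_setU1 (negbTE yz).
have tx := Ab_tls vb xv.
have Sxy := tls_St tx yx.
have xy : x != y by rewrite eq_sym.
have [s' [p' [s'A Ts' p's' p'T p'w]]] := petal cT bT (sepw_card x y).
have Es' : s' = p' |: T by apply: plusT.
have xs' : x \in s' by rewrite Es' in_setU1 xT orbT.
have ys' : y \in s' by rewrite Es' in_setU1 yT orbT.
have [u [us' uw ux uy]] := sepP xy Sxy s'A xs' ys'.
have uT : u \in T.
  move: us'; rewrite Es' in_setU1 => /orP[/eqP up|//].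
  by move: p'w; rewrite -up uw.
have uz : u != z by apply: contraNneq zT => <-.
have yv0 : y \in v0 by apply: (subsetP T0v0).
have uv : u \in v by apply: (subsetP Tv).
exists ((x, y), u); first by rewrite inE /= xv0 yv0 uw.
by rewrite /= xv yv uv /= !inE !negb_or xy xz yz uz (eq_sym x u) ux (eq_sym y u) uy.
Qed.
Lemma Ab1_card : #|Ab1| <= 64 * n.
Proof.
have := @ub _ _ Ab1 [set: 'I_n] (fun z v => v \in Hz z).
move=> /(_ _) h; apply: leq_trans (h _) _.
  move=> v; rewrite inE => /andP[vb /existsP[T /and3P[Tv /eqP cT bT]]].
  have [z zv zT] := out3 cT (Ab_A vb).
  exists z; first by rewrite inE.
  rewrite inE vb zv /=; apply/existsP; exists T; by rewrite Tv cT eqxx zT bT.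
apply: leq_trans (_ : \sum_(z in [set: 'I_n]) 64 <= _)%N.
  by apply: leq_sum => z _; apply: leq_trans (Hz_card z); apply: subset_leq_card;
     apply/subsetP => v; rewrite inE => /andP[].
by rewrite sum_nat_const cardsT card_ord mulnC.
Qed.

Lemma card3 (x y u : 'I_n) : uniq [:: x; y; u] -> #|[set x; y; u]| = 3.
Proof.
rewrite /= !inE !negb_or => /and3P[/andP[xy xu] yu _].
have -> : [set x; y; u] = x |: (y |: [set u]) by apply/setP=> e; rewrite !inE orbA.
by rewrite !cardsU1 cards1 !inE !negb_or xy xu yu.
Qed.

Lemma card_idx2 x (v0 : {set 'I_n}) : v0 \in A ->
  #|[set p : 'I_n * 'I_n | (p.1 \in v0) && (p.2 \in sepw x p.1)]| <= 16.
Proof.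
move=> v0A.
have := @ub _ _ [set p : 'I_n * 'I_n | (p.1 \in v0) && (p.2 \in sepw x p.1)] v0 (fun q p => p.1 == q).
move=> /(_ _) h; apply: leq_trans (h _) _.
  by move=> [y u]; rewrite inE /= => /andP[yv _]; exists y.
apply: leq_trans (_ : \sum_(q in v0) 4 <= 16)%N.
  apply: leq_sum => y _.
  apply: leq_trans (sepw_card x y).
  apply: leq_trans (leq_imset_card (fun u => (y, u)) (sepw x y)).
  apply: subset_leq_card; apply/subsetP => [[a u]].
  rewrite !inE /= => /andP[/andP[_ us] /eqP E]; subst a.
  by apply/imsetP; exists u.
by rewrite sum_nat_const c4.
Qed.

Lemma Ab0_Ab v : v \in Ab0 -> v \in Ab.
Proof. by rewrite inE => /andP[]. Qed.
Lemma Ab0_nb v : v \in Ab0 -> ~~ bigv v.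
Proof. by rewrite inE => /andP[]. Qed.

Lemma Fx_card x : #|[set v in Ab0 | x \in v]| <= 64.
Proof.
set F := [set v in Ab0 | x \in v].
have Fb v : v \in F -> v \in Ab by rewrite inE => /andP[/Ab0_Ab].
have FA v : v \in F -> v \in A by move/Fb/Ab_A.
have Fnb v : v \in F -> ~~ bigv v by rewrite inE => /andP[/Ab0_nb].
have Fx v : v \in F -> x \in v by rewrite inE => /andP[].
case: (set_0Vmem F) => [->|[v0 v0F]]; first by rewrite cards0.
have v0A := FA _ v0F.
have := @ub _ _ F [set p : 'I_n * 'I_n | (p.1 \in v0) && (p.2 \in sepw x p.1)]
  (fun p v => [&& p.1 \in v, p.2 \in v & uniq [:: x; p.1; p.2]]).
move=> /(_ _) h; apply: leq_trans (h _) _; last first.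
  apply: leq_trans (_ : \sum_(p in [set p : 'I_n * 'I_n | (p.1 \in v0) && (p.2 \in sepw x p.1)]) 4 <= 64)%N; last first.
    by rewrite sum_nat_const; apply: leq_trans (leq_mul (card_idx2 x v0A) (leqnn 4)) _.
  apply: leq_sum => [[y u]] _ /=.
  set G := [set v in F | _].
  case: (set_0Vmem G) => [->|[w wG]]; first by rewrite cards0.
  move: (wG); rewrite inE => /andP[wF /and3P[yw uw un]].
  have Tw : [set x; y; u] \subset w.
    by apply/subsetP => e; rewrite !inE => /orP[/orP[]|] /eqP->; rewrite ?Fx.
  have cT := card3 un.
  have : ~~ (4 < tcnt [set x; y; u]).
    apply: contra (Fnb _ wF) => bT; apply/existsP; exists [set x; y; u].
    by rewrite Tw cT eqxx.
  rewrite -leqNgt; apply: leq_trans; apply: subset_leq_card; apply/subsetP => s.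
  rewrite /G inE => /andP[sF /and3P[ys us _]]; rewrite inE (FA _ sF) /=.
  by apply/subsetP => e; rewrite !inE => /orP[/orP[]|] /eqP->; rewrite ?Fx.
move=> v vF.
have vA := FA _ vF.
have xI : x \in v :&: v0 by rewrite inE !Fx.
have [y yI yx] := two_in (i1 vA v0A) xI.
move: yI; rewrite inE => /andP[yv yv0].
have tx := Ab_tls (Fb _ vF) (Fx _ vF).
have Sxy := tls_St tx yx.
have xy : x != y by rewrite eq_sym.
have [u [uv uw ux uy]] := sepP xy Sxy vA (Fx _ vF) yv.
exists (y, u); first by rewrite inE /= yv0 uw.
by rewrite /= yv uv /= !inE !negb_or xy (eq_sym x u) ux (eq_sym y u) uy.
Qed.

Lemma Ab0_card : #|Ab0| <= 64 * n.
Proof.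
have := @ub _ _ Ab0 [set: 'I_n] (fun x v => x \in v).
move=> /(_ _) h; apply: leq_trans (h _) _.
  move=> v; rewrite inE => /andP[vb _].
  have : 0 < #|v| by rewrite c4 // Ab_A.
  by case/card_gt0P => z zv; exists z; rewrite ?inE.
apply: leq_trans (_ : \sum_(z in [set: 'I_n]) 64 <= _)%N.
  by apply: leq_sum => z _; apply: Fx_card.
by rewrite sum_nat_const cardsT card_ord mulnC.
Qed.
Definition Ac1 := [set v in A | [forall x in v, prd x]].
Definition Ac2 := [set v in A | [&& v \notin Aa, v \notin Ab & v \notin Ac1]].
Definition Pd := [set x | prd x].
Definition Tl := [set x | tls x].

Lemma classify v x : v \in A -> v \notin Aa -> x \in v -> prd x || tls x.
Proof.
move=> vA vna xv; case: (boolP (tls x)) => [_|ntx]; first by rewrite orbT.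
rewrite orbF; move/forallPn: ntx => [y /negPn txy].
apply: contraT => npx; exfalso; move/negP: vna; apply; rewrite inE vA /=.
have : 1 < #|[set y | twin x y]|.
  rewrite ltn_neqAle eq_sym npx /=; apply/card_gt0P; exists y; by rewrite inE.
case/card_gt1P => y1 [y2 []]; rewrite !inE => t1 t2 y12.
have y1v : y1 \in v by rewrite -(twin_mem t1 vA).
have y2v : y2 \in v by rewrite -(twin_mem t2 vA).
have x1 : x != y1 by rewrite eq_sym (twin_neq t1).
have x2 : x != y2 by rewrite eq_sym (twin_neq t2).
have u3 : uniq [:: x; y1; y2] by rewrite /= !inE !negb_or x1 x2 y12.
have [z zv zT] := out3 (card3 u3) vA.
move: zT; rewrite !inE !negb_or => /andP[/andP[zx zy1] zy2].
apply/existsP; exists z; rewrite zv /=; apply/cards1P; exists v.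
apply/setP => s; rewrite !inE; apply/idP/eqP => [/andP[sA zs]|->]; last by rewrite vA zv.
case xs: (x \in s).
- have y1s : y1 \in s by rewrite -(twin_mem t1 sA).
  have y2s : y2 \in s by rewrite -(twin_mem t2 sA).
  apply: (@eq4 s v [:: x; y1; y2; z] sA vA) => //.
  + by rewrite /= !inE !negb_or x1 x2 y12 (eq_sym x z) zx (eq_sym y1 z) zy1 (eq_sym y2 z) zy2.
  + by move=> e; rewrite !inE => /or4P[] /eqP->.
  + by move=> e; rewrite !inE => /or4P[] /eqP->.
- have y1s : y1 \notin s by rewrite -(twin_mem t1 sA) xs.
  have y2s : y2 \notin s by rewrite -(twin_mem t2 sA) xs.
  have zI : z \in s :&: v by rewrite inE zs zv.
  have [e eI ez] := two_in (i1 sA vA) zI.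
  move: eI; rewrite inE => /andP[es ev].
  have ex : e != x by apply: contraTneq es => ->; rewrite xs.
  have ey1 : e != y1 by apply: contraTneq es => ->.
  have ey2 : e != y2 by apply: contraTneq es => ->.
  have := @no5 v [:: e; z; x; y1; y2] vA.
  rewrite /= !inE !negb_or ez ex ey1 ey2 zx zy1 zy2.
  rewrite x1 x2 y12 => /(_ isT) h.
  suff : (5 <= 4)%N by [].
  by apply: h => w; rewrite !inE => /or4P[| | |/orP[]] /eqP->.
Qed.

Lemma Ac2_A v : v \in Ac2 -> v \in A.
Proof. by rewrite inE => /andP[]. Qed.

Lemma Ac2_facts v x e : v \in Ac2 -> prd x -> x \in v -> e \in v -> e != x -> e != tw x -> tls e.
Proof.
move=> vc px xv ev ex etx; have vA := Ac2_A vc.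
move: (vc); rewrite inE vA /= => /and3P[vna vnb vnc].
case/orP: (classify vA vna ev) => // pe.
exfalso.
have : ~~ [forall x in v, prd x] by move: vnc; rewrite inE vA.
case/forallPn => c; rewrite negb_imply => /andP[cv npc].
have tc : tls c by move: (classify vA vna cv); rewrite (negbTE npc).
have [k1 k2] := kern_disj px pe ex etx.
have := @no5 v [:: c; x; tw x; e; tw e] vA.
have ptx := prd_tw_prd px; have pte := prd_tw_prd pe.
rewrite /= !inE !negb_or !(tls_neq_prd tc) // (eq_sym x (tw x)) (tw_neq px).
rewrite (eq_sym x e) ex (eq_sym x (tw e)) k1 (eq_sym (tw x) e) etx (eq_sym (tw x) (tw e)) k2.
rewrite (eq_sym e (tw e)) (tw_neq pe) => /(_ isT) h.
suff : (5 <= 4)%N by [].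
apply: h => w; rewrite !inE => /or4P[| | |/orP[]] /eqP->; rewrite ?tw_mem //.
Qed.


Lemma both_in s w y p q : s \in A -> w \in A -> prd y -> p \in w -> p \in s -> q \notin s ->
  (forall e, e \in w -> e != y -> e != tw y -> (e == p) || (e == q)) ->
  (y \in s) && (tw y \in s).
Proof.
move=> sA wA py pw ps qs H.
have pI : p \in s :&: w by rewrite inE ps pw.
have [d dI dp] := two_in (i1 sA wA) pI.
move: dI; rewrite inE => /andP[ds dw].
have dq : d != q by apply: contraNneq qs => <-.
have E := twin_mem (prd_tw py) sA.
case: (boolP (d == y)) => [/eqP dy|dy]; first by rewrite -E -dy ds.
case: (boolP (d == tw y)) => [/eqP dty|dty]; first by rewrite E -dty ds.
by move: (H d dw dy dty); rewrite (negbTE dp) (negbTE dq).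
Qed.

Lemma side v v' x x' p q s : prd x -> prd x' -> x' != x -> x' != tw x -> tls p ->
  v \in A -> v' \in A -> p \in v -> p \in v' ->
  (forall e, e \in v -> e != x -> e != tw x -> (e == p) || (e == q)) ->
  (forall e, e \in v' -> e != x' -> e != tw x' -> (e == p) || (e == q)) ->
  s \in A -> p \in s -> q \notin s -> False.
Proof.
move=> px px' h1 h2 tp vA v'A pv pv' Hv Hv' sA ps qs.
case/andP: (both_in sA vA px pv ps qs Hv) => xs txs.
case/andP: (both_in sA v'A px' pv' ps qs Hv') => x's tx's.
have [k1 k2] := kern_disj px px' h1 h2.
have ptx := prd_tw_prd px; have ptx' := prd_tw_prd px'.
have := @no5 s [:: p; x; tw x; x'; tw x'] sA.
rewrite /= !inE !negb_or !(tls_neq_prd tp) // (eq_sym x (tw x)) (tw_neq px).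
rewrite (eq_sym x x') h1 (eq_sym x (tw x')) k1 (eq_sym (tw x) x') h2 (eq_sym (tw x) (tw x')) k2.
rewrite (eq_sym x' (tw x')) (tw_neq px') => /(_ isT) h.
suff : (5 <= 4)%N by [].
by apply: h => w; rewrite !inE => /or4P[| | |/orP[]] /eqP->.
Qed.

Lemma rest4 v x p q : v \in A -> prd x -> tls p -> tls q -> p != q ->
  x \in v -> p \in v -> q \in v ->
  forall e, e \in v -> e != x -> e != tw x -> (e == p) || (e == q).
Proof.
move=> vA px tp tq pq xv pv qv e ev ex etx.
have ptx := prd_tw_prd px.
have := @in4 v [:: x; tw x; p; q] e vA.
rewrite /= !inE !negb_or (eq_sym x (tw x)) (tw_neq px).
have xp : x != p by rewrite eq_sym (tls_neq_prd tp px).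
have xq : x != q by rewrite eq_sym (tls_neq_prd tq px).
have tp' : tw x != p by rewrite eq_sym (tls_neq_prd tp ptx).
have tq' : tw x != q by rewrite eq_sym (tls_neq_prd tq ptx).
rewrite xp xq tp' tq' pq => /(_ isT erefl) h.
have : [|| e == x, e == tw x, e == p | e == q].
  by apply: h => // w; rewrite !inE => /or4P[] /eqP->; rewrite ?tw_mem.
by rewrite (negbTE ex) (negbTE etx).
Qed.

Lemma S_uniq x x' a v v' : prd x -> prd x' -> tls a -> v \in Ac2 -> x \in v -> a \in v ->
  v' \in Ac2 -> x' \in v' -> a \in v' -> (x' == x) || (x' == tw x).
Proof.
move=> px px' ta vc xv av v'c x'v' av'.
apply: contraT; rewrite negb_or => /andP[h1 h2]; exfalso.
have vA := Ac2_A vc; have v'A := Ac2_A v'c.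
have [k1 k2] := kern_disj px px' h1 h2.
have aI : a \in v :&: v' by rewrite inE av av'.
have [c cI ca] := two_in (i1 vA v'A) aI.
move: cI; rewrite inE => /andP[cv cv'].
have cx : c != x.
  apply: contraTneq cv' => -> ; apply/negP => xv'.
  have := Ac2_facts v'c px' x'v' xv'; rewrite eq_sym h1 eq_sym k1 => /(_ isT isT).
  by move/tls_prd; rewrite px.
have ctx : c != tw x.
  apply: contraTneq cv' => -> ; apply/negP => xv'.
  have := Ac2_facts v'c px' x'v' xv'; rewrite eq_sym h2 eq_sym k2 => /(_ isT isT).
  by move/tls_prd; rewrite prd_tw_prd.
have tc := Ac2_facts vc px xv cv cx ctx.
have ac : a != c by rewrite eq_sym.
have Hv := rest4 vA px ta tc ac xv av cv.
have Hv' := rest4 v'A px' ta tc ac x'v' av' cv'.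
have Hvs : forall e, e \in v -> e != x -> e != tw x -> (e == c) || (e == a).
  by move=> e ev ex etx; rewrite orbC Hv.
have Hv's : forall e, e \in v' -> e != x' -> e != tw x' -> (e == c) || (e == a).
  by move=> e ev ex etx; rewrite orbC Hv'.
move/forallP: (ta) => /(_ c); rewrite /twin ca /= => /negP; apply.
apply/eqP/setP => s; rewrite !inE; case sA: (s \in A) => //=.
apply/idP/idP => h.
- apply/negPn/negP => cs.
  exact: (side px px' h1 h2 ta vA v'A av av' Hv Hv' sA h cs).
- apply/negPn/negP => as_.
  exact: (side px px' h1 h2 tc vA v'A cv cv' Hvs Hv's sA h as_).
Qed.
Definition Px x := [set v in Ac2 | x \in v].
Definition Sx x := [set a in Tl | [exists v in Px x, a \in v]].

Lemma PxE x v : (v \in Px x) = (v \in Ac2) && (x \in v).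
Proof. by rewrite inE. Qed.

Lemma SxE x a : (a \in Sx x) = tls a && [exists v in Px x, a \in v].
Proof. by rewrite inE [a \in Tl]inE. Qed.

Lemma Px_dA x : prd x -> #|Px x| <= dA A.
Proof.
move=> px; rewrite /dA.
apply: leq_trans (_ : #|[set v in A | [set (x, tw x).1; (x, tw x).2] \subset v]| <= _).
  apply: subset_leq_card; apply/subsetP => v; rewrite PxE => /andP[vc xv].
  rewrite inE (Ac2_A vc) /=; apply/subsetP => e; rewrite !inE => /orP[] /eqP->//.
  by rewrite tw_mem // Ac2_A.
apply: (leq_bigmax_cond (F := fun p : 'I_n * 'I_n => #|[set v in A | [set p.1; p.2] \subset v]|) (x, tw x)).
by rewrite /= eq_sym tw_neq.
Qed.

Lemma two_out v x : v \in A -> prd x -> x \in v -> 2 <= #|v :\: [set x; tw x]|.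
Proof.
move=> vA px xv; rewrite cardsD c4 //.
have : #|v :&: [set x; tw x]| <= 2.
  by apply: leq_trans (subset_leq_card (subsetIr _ _)) _; rewrite cards2; case: (_ != _).
lia.
Qed.

Lemma Ac2_x v x : v \in Ac2 -> x \in v -> prd x ->
  forall e, e \in v :\: [set x; tw x] -> tls e.
Proof.
move=> vc xv px e; rewrite !inE negb_or => /andP[/andP[ex etx] ev].
exact: Ac2_facts vc px xv ev ex etx.
Qed.

Lemma Px_sq x : prd x -> 2 * #|Px x| <= #|Sx x| * #|Sx x|.
Proof.
move=> px.
have E := dcount (Sx x) (Px x) (fun a v => a \in v).
have L : 2 * #|Px x| <= \sum_(v in Px x) #|[set a in Sx x | a \in v]|.
  rewrite mulnC -sum_nat_const leq_sum // => v; rewrite PxE => /andP[vc xv].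
  apply: leq_trans (two_out (Ac2_A vc) px xv) _; apply: subset_leq_card.
  apply/subsetP => e eo; have te := Ac2_x vc xv px eo.
  move: eo; rewrite !inE => /andP[_ ev]; rewrite te ev andbT /=.
  by apply/existsP; exists v; rewrite PxE vc xv ev.
apply: leq_trans L _; rewrite -E -sum_nat_const leq_sum // => a aS.
have ta : tls a by move: aS; rewrite SxE => /andP[].
have := @ub _ _ [set v in Px x | a \in v] (Sx x) (fun b v => (b \in v) && (b != a)).
move=> /(_ _) h; apply: leq_trans (h _) _.
  move=> v; rewrite inE PxE => /andP[/andP[vc xv] av].
  have := two_out (Ac2_A vc) px xv; case/card_gt1P => b1 [b2 [b1o b2o b12]].
  have [b bo ba] : exists2 b, b \in v :\: [set x; tw x] & b != a.
    case: (eqVneq b1 a) => [e1|]; last by exists b1.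
    by exists b2 => //; rewrite -e1 eq_sym.
  have tb := Ac2_x vc xv px bo.
  move: bo; rewrite !inE => /andP[_ bv]; exists b; last by rewrite bv ba.
  by rewrite SxE tb /=; apply/existsP; exists v; rewrite PxE vc xv bv.
rewrite -sum1_card leq_sum // => b bS.
have tb : tls b by move: bS; rewrite SxE => /andP[].
apply: card_le1 => v1 v2; rewrite inE [v1 \in [set _ in _ | _]]inE PxE.
move=> /andP[/andP[/andP[v1c xv1] av1] /andP[bv1 ba]].
rewrite inE [v2 \in [set _ in _ | _]]inE PxE.
move=> /andP[/andP[/andP[v2c xv2] av2] /andP[bv2 _]].
have ptx := prd_tw_prd px.
apply: (@eq4 v1 v2 [:: x; tw x; a; b] (Ac2_A v1c) (Ac2_A v2c)) => //.
- rewrite /= !inE !negb_or (eq_sym x (tw x)) (tw_neq px).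
  rewrite (eq_sym x a) (tls_neq_prd ta px) (eq_sym x b) (tls_neq_prd tb px).
  rewrite (eq_sym (tw x) a) (tls_neq_prd ta ptx) (eq_sym (tw x) b) (tls_neq_prd tb ptx).
  by rewrite eq_sym ba.
- by move=> e; rewrite !inE => /or4P[] /eqP->; rewrite ?tw_mem // Ac2_A.
- by move=> e; rewrite !inE => /or4P[] /eqP->; rewrite ?tw_mem // Ac2_A.
Qed.

Lemma sumS : \sum_(x in Pd) #|Sx x| <= 2 * #|Tl|.
Proof.
have E := dcount Pd Tl (fun x a => [exists v in Px x, a \in v]).
rewrite /Sx E mulnC -sum_nat_const leq_sum // => a; rewrite inE => ta.
set G := [set x in Pd | _].
case: (set_0Vmem G) => [->|[x0 x0G]]; first by rewrite cards0.
have [px0 [v0 v0P av0]] : prd x0 /\ exists2 v, v \in Px x0 & a \in v.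
  move: x0G; rewrite /G inE [x0 \in Pd]inE => /andP[-> /existsP[v /andP[vP av]]].
  by split => //; exists v.
apply: leq_trans (_ : #|[set x0; tw x0]| <= 2); last first.
  by rewrite cards2; case: (_ != _).
apply: subset_leq_card; apply/subsetP => x; rewrite /G inE [x \in Pd]inE.
move=> /andP[px /existsP[v /andP[vP av]]].
move: vP v0P; rewrite !PxE => /andP[vc xv] /andP[v0c x0v0].
rewrite !inE.
exact: (S_uniq px0 px ta v0c x0v0 av0 vc xv av).
Qed.

Lemma Ac2_prd v : v \in Ac2 -> exists2 x, x \in v & prd x.
Proof.
move=> vc; have vA := Ac2_A vc.
move: (vc); rewrite inE vA /= => /and3P[vna vnb _].
have : ~~ [forall x in v, tls x] by move: vnb; rewrite inE vA.
case/forallPn => c; rewrite negb_imply => /andP[cv ntc].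
exists c => //; move: (classify vA vna cv); by rewrite (negbTE ntc) orbF.
Qed.

Lemma Ac2_sum : 2 * #|Ac2| <= \sum_(x in Pd) #|Px x|.
Proof.
have E := dcount Pd Ac2 (fun x v => x \in v).
rewrite /Px E mulnC -sum_nat_const leq_sum // => v vc.
have [x xv px] := Ac2_prd vc.
apply: leq_trans (_ : #|[set x; tw x]| <= _).
  by rewrite cards2 eq_sym tw_neq.
apply: subset_leq_card; apply/subsetP => e; rewrite !inE => /orP[] /eqP->.
  by rewrite px xv.
by rewrite prd_tw_prd // tw_mem // Ac2_A.
Qed.

Lemma Ac1_A v : v \in Ac1 -> v \in A.
Proof. by rewrite inE => /andP[]. Qed.

Lemma Ac1_prd v e : v \in Ac1 -> e \in v -> prd e.
Proof. by rewrite inE => /andP[_ /forallP H] ev; have := H e; rewrite ev. Qed.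

Lemma Ac1_sum : 4 * #|Ac1| <= \sum_(x in Pd) #|[set v in Ac1 | x \in v]|.
Proof.
have E := dcount Pd Ac1 (fun x v => x \in v).
rewrite E mulnC -sum_nat_const leq_sum // => v vc.
rewrite -(c4 (Ac1_A vc)); apply: subset_leq_card; apply/subsetP => e ev.
by rewrite inE [e \in Pd]inE ev (Ac1_prd vc ev).
Qed.

Lemma Ac1_x x : prd x -> 2 * #|[set v in Ac1 | x \in v]| <= #|Pd|.
Proof.
move=> px.
set V := [set v in Ac1 | x \in v].
have VE v : (v \in V) = (v \in Ac1) && (x \in v) by rewrite inE.
have E := dcount Pd V (fun a v => (a \in v) && (a \notin [set x; tw x])).
have L : 2 * #|V| <= \sum_(v in V) #|[set a in Pd | (a \in v) && (a \notin [set x; tw x])]|.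
  rewrite mulnC -sum_nat_const leq_sum // => v; rewrite VE => /andP[vc xv].
  apply: leq_trans (two_out (Ac1_A vc) px xv) _; apply: subset_leq_card.
  apply/subsetP => e; rewrite [e \in _ :\: _]inE => /andP[ne ev].
  by rewrite inE [e \in Pd]inE (Ac1_prd vc ev) ev ne.
apply: leq_trans L _; rewrite -E -sum1_card leq_sum // => a; rewrite inE => pa.
apply: card_le1 => v1 v2; rewrite inE VE => /andP[/andP[v1c xv1] /andP[av1 na]].
rewrite inE VE => /andP[/andP[v2c xv2] /andP[av2 _]].
move: na; rewrite !inE negb_or => /andP[ax atx].
have [k1 k2] := kern_disj px pa ax atx.
apply: (@eq4 v1 v2 [:: x; tw x; a; tw a] (Ac1_A v1c) (Ac1_A v2c)) => //.
- rewrite /= !inE !negb_or (eq_sym x (tw x)) (tw_neq px) (eq_sym x a) ax.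
  rewrite (eq_sym x (tw a)) k1 (eq_sym (tw x) a) atx (eq_sym (tw x) (tw a)) k2.
  by rewrite eq_sym tw_neq.
- by move=> e; rewrite !inE => /or4P[] /eqP->; rewrite ?tw_mem // Ac1_A.
- by move=> e; rewrite !inE => /or4P[] /eqP->; rewrite ?tw_mem // Ac1_A.
Qed.

Lemma Ac1_card : 8 * #|Ac1| <= #|Pd| * #|Pd|.
Proof.
have h := Ac1_sum.
have : 2 * \sum_(x in Pd) #|[set v in Ac1 | x \in v]| <= #|Pd| * #|Pd|.
  rewrite big_distrr /= -sum_nat_const leq_sum // => x; rewrite inE => px.
  exact: Ac1_x.
lia.
Qed.

Lemma A_split : #|A| <= #|Aa| + #|Ab1| + #|Ab0| + #|Ac1| + #|Ac2|.
Proof.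
apply: leq_trans (_ : #|Aa :|: Ab1 :|: Ab0 :|: Ac1 :|: Ac2| <= _).
  apply: subset_leq_card; apply/subsetP => v vA; rewrite !in_setU.
  case: (boolP (v \in Aa)) => //= vna.
  case: (boolP (v \in Ab)) => [vb|vnb].
    case: (boolP (bigv v)) => h.
      by rewrite [v \in Ab1]inE vb h.
    by rewrite [v \in Ab0]inE vb h !orbT.
  case: (boolP (v \in Ac1)) => [_|vnc]; first by rewrite orbT.
  by rewrite [v \in Ac2]inE vA vna vnb vnc !orbT.
do 4 (apply: leq_trans (leq_card_setU _ _) _; rewrite leq_add2r).
done.
Qed.

Lemma TlPd : #|Tl| + #|Pd| <= n.
Proof.
apply: (@leq_trans (#|Pd| + #|~: Pd|)); last by rewrite cardsC card_ord.
rewrite addnC leq_add2l.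
apply: subset_leq_card; apply/subsetP => x; rewrite !inE => tx.
by apply: tls_prd.
Qed.

End Main.

Import Order.TTheory GRing.Theory Num.Theory.
From mathcomp Require Import lra.

Section Real.
Local Open Scope ring_scope.
Variable R : realType.

Lemma real_Px (t : R) (n s P D : nat) : 0 < t ->
  (2 * P <= s * s)%N -> (P <= D)%N -> D%:R <= (t * n%:R) ^+ 2 / 2 ->
  P%:R <= t * n%:R * s%:R / 2.
Proof.
move=> t0 h1 h2 h3.
have h1' := h1; rewrite -(ler_nat R) !natrM in h1'.
have h2' : P%:R <= (t * n%:R) ^+ 2 / 2 :> R by apply: le_trans h3; rewrite ler_nat.
have n0 : 0 <= n%:R :> R by [].
have s0 : 0 <= s%:R :> R by [].
have tn0 : 0 <= t * n%:R by rewrite mulr_ge0 // ltW.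
case: (lerP s%:R (t * n%:R)) => hs.
- have : s%:R * s%:R <= t * n%:R * s%:R by rewrite ler_wpM2r.
  lra.
- have : (t * n%:R) ^+ 2 <= t * n%:R * s%:R by rewrite expr2 ler_wpM2l // ltW.
  lra.
Qed.

End Real.

Section Final.
Local Open Scope ring_scope.
Variable R : realType.

Lemma main_bound (t : R) n (A : {set {set 'I_n}}) : 0 < t -> vertex_set A -> independent_G41 A ->
  (dA A)%:R <= (t * n%:R) ^+ 2 / 2 ->
  (#|A|)%:R <= 129 * n%:R + (#|Pd A|)%:R ^+ 2 / 8 + t * n%:R * (n%:R - (#|Pd A|)%:R) / 2.
Proof.
move=> ht HV HI hd.
have hA := A_split A; rewrite -(ler_nat R) !natrD in hA.
have ha := Aa_card A; rewrite -(ler_nat R) in ha.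
have hb1 := Ab1_card HV HI; rewrite -(ler_nat R) natrM in hb1.
have hb0 := Ab0_card HV HI; rewrite -(ler_nat R) natrM in hb0.
have hc1 := Ac1_card HV; rewrite -(ler_nat R) !natrM in hc1.
have hc2 := Ac2_sum HV HI; rewrite -(ler_nat R) natrM in hc2.
have H1 : (\sum_(x in Pd A) #|Px A x|)%:R <= \sum_(x in Pd A) (t * n%:R * (#|Sx A x|)%:R / 2).
  rewrite natr_sum; apply: ler_sum => x; rewrite inE => px.
  exact: real_Px ht (Px_sq HV HI px) (Px_dA px) hd.
have H2 : \sum_(x in Pd A) (t * n%:R * (#|Sx A x|)%:R / 2) =
    t * n%:R / 2 * (\sum_(x in Pd A) #|Sx A x|)%:R.
  by rewrite natr_sum mulr_sumr; apply: eq_bigr => x _; rewrite mulrAC.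
have H3 := sumS HV HI; rewrite -(ler_nat R) natrM in H3.
have H4 := TlPd A; rewrite -(ler_nat R) natrD in H4.
set S := (\sum_(x in Pd A) #|Px A x|)%:R in hc2 H1.
set sig := (\sum_(x in Pd A) #|Sx A x|)%:R in H2 H3.
set T := (#|Tl A|)%:R in H3 H4.
set p := (#|Pd A|)%:R in hc1 H4 *.
have tn0 : 0 <= t * n%:R by rewrite mulr_ge0 // ltW.
have H5 : t * n%:R * sig <= t * n%:R * (2 * T) by rewrite ler_wpM2l.
have H6 : t * n%:R * T <= t * n%:R * (n%:R - p) by rewrite ler_wpM2l // lerBrDr.
rewrite H2 in H1.
lra.
Qed.

End Final.

Local Open Scope ring_scope.
Unset Implicit Arguments.
Theorem theorem6 (R : realType) (t : R) (ht0 : 0 < t) (ht1 : t < 1) :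
  forall eps : R, 0 < eps ->
  exists N : nat, forall n : nat, (N <= n)%N ->
  forall A : {set {set 'I_n}},
    vertex_set A -> independent_G41 A ->
    (dA A)%:R <= (t * n%:R) ^+ 2 / 2 ->
    (#|A|)%:R <= (1 + eps) * Num.max (n%:R ^+ 2 / 8) (t * n%:R ^+ 2 / 2).
Proof.
move=> eps he.
have K0 : 0 <= 1032 / eps by rewrite divr_ge0 // ltW.
exists (Num.Def.archi_bound (1032 / eps)) => n hn A HV HI hd.
have hK : 1032 / eps < n%:R.
  apply: lt_le_trans (archi_boundP K0) _; by rewrite ler_nat.
have hen : 1032 < eps * n%:R by rewrite mulrC -ltr_pdivrMr.
have n0 : 0 < n%:R :> R by apply: le_lt_trans hK.
have hm := main_bound ht0 HV HI hd.
have hp := TlPd A; rewrite -(ler_nat R) natrD in hp.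
set p := (#|Pd A|)%:R in hm hp.
set T := (#|Tl A|)%:R in hp.
have p0 : 0 <= p by [].
have T0 : 0 <= T by [].
set M := Num.max _ _.
have M1 : n%:R ^+ 2 / 8 <= M by rewrite le_max lexx.
have M2 : t * n%:R ^+ 2 / 2 <= M by rewrite le_max lexx orbT.
have h1 : 0 <= p * (M - n%:R ^+ 2 / 8) by rewrite mulr_ge0 // subr_ge0.
have h2 : 0 <= (n%:R - p) * (M - t * n%:R ^+ 2 / 2) by rewrite mulr_ge0 // subr_ge0; lra.
have h3 : 0 <= p * (n%:R - p) by rewrite mulr_ge0 //; lra.
have HY : p * n%:R / 8 + t * n%:R * (n%:R - p) / 2 <= M.
  rewrite -(ler_pM2l n0).
  nra.
have h4 : 0 <= (eps * n%:R - 1032) * n%:R by rewrite mulr_ge0 //; lra.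
have h5 : eps * (n%:R ^+ 2 / 8) <= eps * M by rewrite ler_wpM2l // ltW.
nra.
Qed.
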